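(* Let $V$ be an $n$-dimensional vector space over a field $\mathbb{F}$ with an alternating bilinear form $\mathsf{s}$ of maximal rank. Then the pre-geometry $\Gamma(V)$ is transversal and has a string diagram (with respect to the natural ordering of the type set $I=\{1,\dots,n-1\}$).
   Context: $\mathrm{Rad}(U)=U\cap U^\perp$ with respect to $\mathsf{s}$; maximal rank means $\dim\mathrm{Rad}(V)\le1$. $\Gamma(V)$: for $i\in I$ the objects of type $i$ are the $i$-dimensional subspaces $U$ with $U\cap\mathrm{Rad}(V)=0$ and $\dim\mathrm{Rad}(U)\le1$; $X,Y$ are incident iff $X=Y$, or $X\subseteq Y$ with $X\cap\mathrm{Rad}(Y)=0$, or vice versa. A flag is a set of pairwise incident objects, a chamber is a flag containing an object of every type. Transversal: every flag is contained in a chamber. Has a string diagram (w.r.t. a total order on $I$): whenever $i<j<k$ and $X,Y,Z$ are objects of types $i,j,k$ with $X$ and $Z$ both incident to $Y$, then $X$ is incident to $Z$. *)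

(* Defs.v *)
From HB Require Import structures.
From mathcomp Require Import all_boot all_order all_algebra.
Set Implicit Arguments. Unset Strict Implicit. Unset Printing Implicit Defensive.
Import GRing.Theory.
Local Open Scope ring_scope.

Section Pregeometry.
Variables (F : fieldType) (vT : vectType F) (s : vT -> vT -> F).

Definition bilinear_form : Prop :=
  (forall u a v w, s u (a *: v + w) = a * s u v + s u w) /\
  (forall v a u w, s (a *: u + w) v = a * s u v + s w v).

Definition alternating : Prop := forall v, s v v = 0.

(* U^perp w.r.t. s, as a subspace: the common kernel of the linear forms
   s u (u ranging over a basis of U); for bilinear s this is
   {v | forall u in U, s u v = 0}. *)
Definition perp (U : {vspace vT}) : {vspace vT} :=
  (\bigcap_(u <- vbasis U) lker (linfun (s u : vT -> F^o)))%VS.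

Definition Rad (U : {vspace vT}) : {vspace vT} := (U :&: perp U)%VS.

Definition maximal_rank : Prop := (\dim (Rad fullv) <= 1)%N.

Definition n_dim : nat := \dim (fullv : {vspace vT}).

Definition is_type (i : nat) : Prop := (1 <= i)%N /\ (i <= n_dim - 1)%N.

Definition object_of_type (i : nat) (U : {vspace vT}) : Prop :=
  is_type i /\ \dim U = i /\ (U :&: Rad fullv = 0)%VS /\ (\dim (Rad U) <= 1)%N.

Definition is_object (U : {vspace vT}) : Prop := exists i, object_of_type i U.

Definition incident (X Y : {vspace vT}) : Prop :=
  X = Y \/ ((X <= Y)%VS /\ (X :&: Rad Y = 0)%VS) \/
  ((Y <= X)%VS /\ (Y :&: Rad X = 0)%VS).

Definition is_flag (Fl : {vspace vT} -> Prop) : Prop :=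
  (forall X, Fl X -> is_object X) /\
  (forall X Y, Fl X -> Fl Y -> incident X Y).

Definition is_chamber (C : {vspace vT} -> Prop) : Prop :=
  is_flag C /\ (forall i, is_type i -> exists X, C X /\ object_of_type i X).

Definition Gamma_transversal : Prop :=
  forall Fl, is_flag Fl ->
    exists C, is_chamber C /\ (forall X, Fl X -> C X).

Definition Gamma_string_diagram : Prop :=
  forall (i j k : nat) (X Y Z : {vspace vT}),
    (i < j)%N -> (j < k)%N ->
    object_of_type i X -> object_of_type j Y -> object_of_type k Z ->
    incident X Y -> incident Z Y -> incident X Z.

End Pregeometry.

(* Main.v *)
Require Import Defs.
From HB Require Import structures.
From mathcomp Require Import all_boot all_order all_algebra zify.
From Stdlib Require Import Classical.
Set Implicit Arguments. Unset Strict Implicit. Unset Printing Implicit Defensive.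
Import GRing.Theory.
Local Open Scope ring_scope.

Section Aux.
Variables (F : fieldType) (vT : vectType F) (s : vT -> vT -> F).
Hypothesis sB : bilinear_form s.
Hypothesis sA : alternating s.

Lemma sR_lin u : linear_for (@GRing.scale F F^o) (s u : vT -> F^o).
Proof. by move=> a v w; rewrite (proj1 sB). Qed.

Definition sR u : {linear vT -> F^o} :=
  HB.pack (s u : vT -> F^o) (GRing.isLinear.Build F vT F^o _ (s u : vT -> F^o) (sR_lin u)).

Lemma sL_lin v : linear_for (@GRing.scale F F^o) ((fun u => s u v) : vT -> F^o).
Proof. by move=> a u w; rewrite (proj2 sB). Qed.

Definition sL v : {linear vT -> F^o} :=
  HB.pack ((fun u => s u v) : vT -> F^o) (GRing.isLinear.Build F vT F^o _ _ (sL_lin v)).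

Lemma mem_bigcap_seq (r : seq vT) (G : vT -> {vspace vT}) v :
  (v \in (\bigcap_(u <- r) G u)%VS) <-> (forall u, u \in r -> v \in G u).
Proof.
elim: r => [|x r IH]; first by rewrite big_nil memvf.
rewrite big_cons memv_cap; split.
  by case/andP=> h1 /IH h2 u; rewrite inE => /orP[/eqP->//|]; apply: h2.
move=> h; rewrite h ?inE ?eqxx //=; apply/IH => u ur; by apply: h; rewrite inE ur orbT.
Qed.

Lemma linfun_s u v : (linfun (s u : vT -> F^o) : vT -> F^o) v = s u v.
Proof. exact: (lfunE (sR u) v). Qed.

Lemma s0l v : s 0 v = 0.
Proof. exact: (linear0 (sL v)). Qed.
Lemma s0r v : s v 0 = 0.
Proof. exact: (linear0 (sR v)). Qed.

Lemma memperp U v : v \in perp s U <-> (forall u, u \in U -> s u v = 0).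
Proof.
rewrite /perp; split=> [/mem_bigcap_seq h u uU|h]; last first.
  by apply/mem_bigcap_seq=> u /vbasis_mem /h; rewrite memv_ker linfun_s => ->.
  rewrite (coord_vbasis uU).
  have := linear_sum (sL v) (index_enum _) xpredT (fun i => coord (vbasis U) i u *: (vbasis U)`_i).
  move=> /= ->; apply: big1 => i _.
  rewrite -[_ *: _]addr0 (proj2 sB) s0l addr0.
  have /h : (vbasis U)`_i \in vbasis U by apply: mem_nth; rewrite size_tuple.
  by rewrite memv_ker linfun_s => /eqP ->; rewrite mulr0.
Qed.

Lemma memRad U v : v \in Rad s U <-> v \in U /\ (forall u, u \in U -> s u v = 0).
Proof.
rewrite /Rad memv_cap; split=> [/andP[-> /memperp]//|[-> h]]; exact/memperp.
Qed.

Lemma skew u v : s u v = - s v u.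
Proof.
have := sA (u + v).
have E1 : forall a b c : vT, s (a + b) c = s a c + s b c.
  by move=> a b c; rewrite -[a]scale1r (proj2 sB) mul1r scale1r.
have E2 : forall a b c : vT, s a (b + c) = s a b + s a c.
  by move=> a b c; rewrite -[b]scale1r (proj1 sB) mul1r scale1r.
rewrite E1 !E2 !sA add0r addr0 => /eqP; rewrite addr_eq0 => /eqP //.
Qed.


Lemma cap0P (U V : {vspace vT}) :
  (U :&: V = 0)%VS <-> (forall w, w \in U -> w \in V -> w = 0).
Proof.
split=> [E w wU wV|h].
  by apply/eqP; rewrite -memv0 -E memv_cap wU wV.
apply/eqP; rewrite -subv0; apply/subvP => w /memv_capP[wU wV].
by rewrite memv0 (h w wU wV).
Qed.

Lemma RadS U : (Rad s U <= U)%VS.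
Proof. exact: capvSl. Qed.

Lemma dimRad_step (A Z : {vspace vT}) : (A <= Z)%VS -> \dim Z = (\dim A).+1 ->
  (A :&: Rad s Z = 0)%VS -> (\dim (Rad s Z) <= 1)%N.
Proof.
move=> AZ dZ E; have := dimv_sum_cap A (Rad s Z); rewrite E dimv0 addn0.
have : (\dim (A + Rad s Z) <= \dim Z)%N by apply: dimvS; rewrite subv_add AZ RadS.
rewrite dZ => h1 h2; move: h1; rewrite h2 -addn1 leq_add2l //.
Qed.

Lemma ext (A B : {vspace vT}) v :
  (A <= B)%VS -> (A :&: Rad s B = 0)%VS ->
  v \in B -> v \notin (A + Rad s B)%VS ->
  (forall w, w \in Rad s A -> s v w = 0 -> w = 0) ->
  exists Z : {vspace vT}, [/\ (A <= Z)%VS, (Z <= B)%VS, \dim Z = (\dim A).+1,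
    (\dim (Rad s Z) <= 1)%N & (A :&: Rad s Z = 0)%VS /\ (Z :&: Rad s B = 0)%VS].
Proof.
move=> AB AB0 vB vW hv.
have v0 : v != 0 by apply: contra vW => /eqP ->; rewrite mem0v.
have vA : v \notin A by apply: contra vW => vA; rewrite -[v]addr0 memv_add ?mem0v.
have E1 : (A :&: Rad s (A + <[v]>) = 0)%VS.
  apply/cap0P => w wA /memRad [wZ hw]; apply: hv.
    apply/memRad; split => // u uA; apply: hw.
    by rewrite -[u]addr0 memv_add ?mem0v.
  by apply: hw; apply/memv_addP; exists 0; rewrite ?mem0v //; exists v; rewrite ?memv_line ?add0r.
have dZ : \dim (A + <[v]>) = (\dim A).+1.
  rewrite dimv_disjoint_sum ?dim_vline ?v0 ?addn1 //.
  apply/cap0P => w wA /vlineP [k wk]; subst w.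
  have [->|k0] := eqVneq k 0; first by rewrite scale0r.
  have : k^-1 *: (k *: v) \in A by apply: memvZ.
  by rewrite scalerA mulVf // scale1r (negbTE vA).
exists (A + <[v]>)%VS; split => //.
- exact: addvSl.
- by rewrite subv_add AB -memvE.
- by apply: (dimRad_step (addvSl _ _)).
split=> //; apply/cap0P => w /memv_addP [a aA [x /vlineP [k ->] ->]] wR.
have [k0|k0] := eqVneq k 0.
  move: wR; rewrite k0 scale0r addr0 => wR.
  by move/cap0P: AB0; apply.
case/negP: vW.
have -> : v = k^-1 *: (a + k *: v) + (- (k^-1 *: a)).
  by rewrite scalerDr scalerA mulVf // scale1r addrAC subrr add0r.
rewrite addrC memv_add //; first by rewrite memvN; exact: memvZ.
exact: memvZ.
Qed.


Lemma sDr u a b : s u (a + b) = s u a + s u b.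
Proof. by rewrite -[a]scale1r (proj1 sB) mul1r scale1r. Qed.
Lemma sZr u k a : s u (k *: a) = k * s u a.
Proof. by rewrite -[_ *: _]addr0 (proj1 sB) s0r addr0. Qed.

Lemma step (A B : {vspace vT}) :
  (A <= B)%VS -> ((\dim A).+1 < \dim B)%N -> (\dim (Rad s A) <= 1)%N ->
  (\dim (Rad s B) <= 1)%N -> (A :&: Rad s B = 0)%VS ->
  exists Z : {vspace vT}, [/\ (A <= Z)%VS, (Z <= B)%VS, \dim Z = (\dim A).+1,
    (\dim (Rad s Z) <= 1)%N & (A :&: Rad s Z = 0)%VS /\ (Z :&: Rad s B = 0)%VS].
Proof.
move=> AB dAB dRA dRB AB0.
set W := (A + Rad s B)%VS.
have BW : ~~ (B <= W)%VS.
  apply/negP => /dimvS; apply/negP; rewrite -ltnNge.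
  apply: leq_ltn_trans dAB; have := dimv_sum_cap A (Rad s B); rewrite -/W => h.
  apply: (@leq_trans (\dim A + \dim (Rad s B))); first by rewrite -h leq_addr.
  by rewrite -addn1 leq_add2l.
have [x xB xW] := subvPn BW.
have [RA0|RA0] := eqVneq (Rad s A) 0%VS.
  apply: (ext AB AB0 xB xW) => w; rewrite RA0 memv0 => /eqP -> //.
set r := vpick (Rad s A).
have rR : r \in Rad s A by apply: memv_pick.
have r0 : r != 0 by rewrite vpick0.
have eqRA : Rad s A = <[r]>%VS.
  by apply/eqP; rewrite eq_sym eqEdim -memvE rR dim_vline r0.
have rA : r \in A by move/memRad: rR => [].
set K := (B :&: lker (linfun (s r : vT -> F^o)))%VS.
have BK : ~~ (B <= K)%VS.
  apply/negP => BK; apply/negP: r0; apply/negPn/eqP.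
  move/cap0P: AB0; apply => //; apply/memRad; split; first by move/subvP: AB; apply.
  move=> u uB; rewrite skew; move/subvP: BK => /(_ u uB).
  by rewrite memv_cap memv_ker linfun_s => /andP[_ /eqP ->]; rewrite oppr0.
have [y yB yK] := subvPn BK.
have sy : s r y != 0.
  by apply: contra yK => h; rewrite memv_cap yB memv_ker linfun_s.
have [v [vB vW sv]] : exists v, [/\ v \in B, v \notin W & s r v != 0].
  have [sx|sx] := eqVneq (s r x) 0; last by exists x.
  case yW : (y \in W); last by exists y; rewrite yW.
  exists (x + y); split.
  - exact: memvD.
  - apply: contra xW => h; rewrite -[x](addrK y); exact: memvB.
  - by rewrite sDr sx add0r.
apply: (ext AB AB0 vB vW) => w; rewrite eqRA => /vlineP [k ->].
rewrite sZr skew mulrN => /eqP; rewrite oppr_eq0 mulf_eq0 (negbTE sv) orbF.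
by move/eqP ->; rewrite scale0r.
Qed.


Lemma fill (B : {vspace vT}) i : forall (A : {vspace vT}),
  (A <= B)%VS -> (\dim A < i)%N -> (i < \dim B)%N -> (\dim (Rad s A) <= 1)%N ->
  (\dim (Rad s B) <= 1)%N -> (A :&: Rad s B = 0)%VS ->
  exists Z : {vspace vT}, [/\ (A <= Z)%VS, (Z <= B)%VS, \dim Z = i,
    (\dim (Rad s Z) <= 1)%N & (A :&: Rad s Z = 0)%VS /\ (Z :&: Rad s B = 0)%VS].
Proof.
move=> A; move: {2}(i - (\dim A).+1)%N (erefl (i - (\dim A).+1)%N) => k.
elim: k A => [|k IH] A ek AB iA iB dRA dRB AB0.
  have ei : i = (\dim A).+1 by lia.
  subst i; exact: step.
have [Z1 [AZ1 Z1B dZ1 dRZ1 [AZ10 Z1B0]]] := step AB (leq_ltn_trans iA iB) dRA dRB AB0.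
have [||Z [Z1Z ZB dZ dRZ [Z1Z0 ZB0]]] := IH Z1 _ Z1B _ iB dRZ1 dRB Z1B0.
- by rewrite dZ1; lia.
- by rewrite dZ1; lia.
exists Z; split => //; first exact: subv_trans AZ1 Z1Z.
split => //; apply/cap0P => w wA wR.
by move/cap0P: Z1Z0; apply => //; move/subvP: AZ1; apply.
Qed.

End Aux.

Lemma max_below (P : nat -> Prop) i : (forall j, P j -> (j < i)%N) ->
  (forall j, ~ P j) \/ exists j, P j /\ forall j', P j' -> (j' <= j)%N.
Proof.
elim: i => [|i IH] hP; first by left=> j /hP.
have [Pi|nPi] := classic (P i).
  by right; exists i; split => // j' /hP.
apply: IH => j Pj; have := hP j Pj; rewrite ltnS leq_eqVlt => /orP[/eqP ej|//].
by subst j.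
Qed.

Lemma min_above (P : nat -> Prop) j0 : P j0 ->
  exists j, P j /\ forall j', P j' -> (j <= j')%N.
Proof.
suff H : forall n j, (j <= n)%N -> P j -> exists j, P j /\ forall j', P j' -> (j <= j')%N.
  exact: (H j0).
elim=> [|n IH] j jn Pj.
  by exists j; split => // j' _; move: jn; rewrite leqn0 => /eqP ->.
have [[j' [j'n Pj']]|nex] := classic (exists j', (j' <= n)%N /\ P j').
  exact: (IH j').
exists j; split => // j' Pj'; rewrite leqNgt; apply/negP => lt.
by apply: nex; exists j'; split => //; lia.
Qed.

Section Main.
Variables (F : fieldType) (vT : vectType F) (s : vT -> vT -> F).
Hypothesis sB : bilinear_form s.
Hypothesis sA : alternating s.
Hypothesis sM : maximal_rank s.

Lemma inc_sym X Y : incident s X Y -> incident s Y X.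
Proof. by rewrite /incident; case=> [->|[]]; auto. Qed.

Lemma inc_lt X Y : incident s X Y -> (\dim X < \dim Y)%N ->
  (X <= Y)%VS /\ (X :&: Rad s Y = 0)%VS.
Proof.
case=> [->|[//|[/dimvS h _]]]; first by rewrite ltnn.
by rewrite ltnNge h.
Qed.

Lemma inc_eq X Y : incident s X Y -> \dim X = \dim Y -> X = Y.
Proof.
case=> [//|[[XY _]|[YX _]]] d; apply/eqP.
  by rewrite eqEdim XY d leqnn.
by rewrite eq_sym eqEdim YX d leqnn.
Qed.

Lemma obj_dim i X : object_of_type s i X -> \dim X = i.
Proof. by case=> _ []. Qed.

Lemma dimRad0 : (\dim (Rad s 0) <= 1)%N.
Proof. by apply: leq_trans (dimvS (RadS s 0)) _; rewrite dimv0. Qed.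

Lemma lower (C : {vspace vT} -> Prop) i : is_flag s C -> (1 <= i)%N ->
  exists A : {vspace vT}, [/\ (\dim A < i)%N, (\dim (Rad s A) <= 1)%N,
    (A :&: Rad s fullv = 0)%VS,
    (forall X, C X -> (\dim X < i)%N -> X = A \/ ((X <= A)%VS /\ (X :&: Rad s A = 0)%VS))
    & (C A \/ A = 0%VS)].
Proof.
move=> [Cobj Cinc] i1.
pose P j := exists X, [/\ C X, object_of_type s j X & (j < i)%N].
have [none|[j [[X0 [CX0 oX0 ji]] mx]]] := @max_below P i (fun j '(ex_intro _ (And3 _ _ h)) => h).
  exists 0%VS; split.
  - by rewrite dimv0.
  - exact: dimRad0.
  - by rewrite cap0v.
  - move=> X CX dX; have [j oX] := Cobj X CX; case: (none j); exists X; split => //.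
    by rewrite -(obj_dim oX).
  - by right.
exists X0; case: (oX0) => _ [dX0 [X0R dRX0]]; split => //; first by rewrite dX0.
  move=> X CX dX; have [j' oX] := Cobj X CX.
  have : (j' <= j)%N by apply: mx; exists X; split => //; rewrite -(obj_dim oX).
  rewrite leq_eqVlt => /orP[/eqP ej|lt].
    by left; apply: inc_eq (Cinc _ _ CX CX0) _; rewrite (obj_dim oX) dX0 ej.
  by right; apply: inc_lt (Cinc _ _ CX CX0) _; rewrite (obj_dim oX) dX0.
by left.
Qed.

Lemma upper (C : {vspace vT} -> Prop) i : is_flag s C -> (i < n_dim vT)%N ->
  exists B : {vspace vT}, [/\ (i < \dim B)%N, (\dim (Rad s B) <= 1)%N,
    (forall Z, (Z <= B)%VS -> (Z :&: Rad s B = 0)%VS -> (Z :&: Rad s fullv = 0)%VS),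
    (forall X, C X -> (i < \dim X)%N -> X = B \/ ((B <= X)%VS /\ (B :&: Rad s X = 0)%VS))
    & (C B \/ B = fullv)].
Proof.
move=> [Cobj Cinc] iN.
pose P j := exists X, [/\ C X, object_of_type s j X & (i < j)%N].
have [[j0 Pj0]|none] := classic (exists j, P j); last first.
  exists fullv; split => //.
  - move=> X CX dX; have [j oX] := Cobj X CX; case: none; exists j; exists X; split => //.
    by rewrite -(obj_dim oX).
  - by right.
have [j [[X0 [CX0 oX0 ij]] mn]] := min_above Pj0.
exists X0; case: (oX0) => _ [dX0 [X0R dRX0]]; split => //.
- by rewrite dX0.
- move=> Z ZX0 _; apply/cap0P => w wZ wR; move/cap0P: X0R; apply => //.
  by move/subvP: ZX0; apply.
- move=> X CX dX; have [j' oX] := Cobj X CX.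
  have : (j <= j')%N by apply: mn; exists X; split => //; rewrite -(obj_dim oX).
  rewrite leq_eqVlt => /orP[/eqP ej|lt].
    by left; apply: inc_eq (Cinc _ _ CX CX0) _; rewrite (obj_dim oX) dX0 ej.
  by right; apply: inc_lt (Cinc _ _ CX0 CX) _; rewrite (obj_dim oX) dX0.
- by left.
Qed.


Lemma add_type (C : {vspace vT} -> Prop) i : is_flag s C -> is_type vT i ->
  ~ (exists X, C X /\ object_of_type s i X) ->
  exists Z, object_of_type s i Z /\ forall X, C X -> incident s X Z.
Proof.
move=> fC [i1 iN] nex.
have iN' : (i < n_dim vT)%N by lia.
have [A [dA dRA AR0 hA CA]] := lower fC i1.
have [B [dB dRB hBZ hB CB]] := upper fC iN'.
have [AB AB0] : (A <= B)%VS /\ (A :&: Rad s B = 0)%VS.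
  case: CA => [CA|->]; last by rewrite sub0v cap0v.
  case: CB => [CB|->]; last by rewrite subvf.
  apply: inc_lt (fC.2 _ _ CA CB) _; exact: ltn_trans dA dB.
have [Z [AZ ZB dZ dRZ [AZ0 ZB0]]] := fill sB sA AB dA dB dRA dRB AB0.
exists Z; split.
  split; first by split. split => //. split => //. exact: hBZ.
move=> X CX; have [j oX] := fC.1 X CX; have dX := obj_dim oX.
have : j != i by apply/negP => /eqP ej; rewrite ej in oX; apply: nex; exists X.
rewrite neq_ltn => /orP[lt|gt].
- have [->|[XA XA0]] := hA X CX ltac:(by rewrite dX).
    by right; left.
  right; left; split; first exact: subv_trans XA AZ.
  apply/cap0P => w wX wR; move/cap0P: AZ0; apply => //; by move/subvP: XA; apply.
- have [->|[BX BX0]] := hB X CX ltac:(by rewrite dX).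
    by right; right.
  right; right; split; first exact: subv_trans ZB BX.
  apply/cap0P => w wZ wR; move/cap0P: BX0; apply => //; by move/subvP: ZB; apply.
Qed.

End Main.

Theorem lemma3p2 (F : fieldType) (vT : vectType F) (s : vT -> vT -> F) :
  bilinear_form s -> alternating s -> maximal_rank s ->
  Gamma_transversal s /\ Gamma_string_diagram s.
Proof.
move=> sB sA sM; split.
- move=> Fl fFl.
  suff H : forall m, exists C, [/\ is_flag s C, forall X, Fl X -> C X &
      forall i, is_type vT i -> (i <= m)%N -> exists X, C X /\ object_of_type s i X].
    have [C [fC sub h]] := H (n_dim vT); exists C; split; last exact: sub.
    split; first exact: fC.
    move=> i ti; apply: h => //; case: ti => _; lia.
  elim=> [|m [C [fC sub h]]].
    by exists Fl; split => // i [i1 _]; lia.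
  have [ex|nex] := classic (exists X, C X /\ object_of_type s m.+1 X).
    by exists C; split => // i ti; rewrite leq_eqVlt => /orP[/eqP->//|]; rewrite ltnS; exact: h.
  have [tm|ntm] := classic (is_type vT m.+1); last first.
    exists C; split => // i ti; rewrite leq_eqVlt => /orP[/eqP ei|]; first by subst.
    by rewrite ltnS; exact: h.
  have [Z [oZ incZ]] := add_type sB sA sM fC tm nex.
  exists (fun X => C X \/ X = Z); split.
  + split.
    * by move=> X [/(fC.1 X)//| ->]; exists m.+1.
    * move=> X Y [CX|->] [CY|->].
      -- exact: fC.2.
      -- exact: incZ.
      -- exact: inc_sym (incZ _ CY).
      -- by left.
  + by move=> X /sub; left.
  + move=> i ti; rewrite leq_eqVlt => /orP[/eqP ->|]; first by exists Z; split => //; right.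
    by rewrite ltnS => /(h i ti) [X [CX oX]]; exists X; split => //; left.
- move=> i j k X Y Z ij jk oX oY oZ XY ZY.
  have [XY1 XY0] := inc_lt XY ltac:(by rewrite (obj_dim oX) (obj_dim oY)).
  have [YZ1 YZ0] := inc_lt (inc_sym ZY) ltac:(by rewrite (obj_dim oY) (obj_dim oZ)).
  right; left; split; first exact: subv_trans XY1 YZ1.
  apply/cap0P => w wX wR; move/cap0P: YZ0; apply => //; by move/subvP: XY1; apply.
Qed.
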